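(* Let $\mathfrak{g}_1,\mathfrak{g}_2$ be nilpotent Lie algebras of dimensions $m_1,m_2$ with $n_1,n_2$ generators as below. If $\mathfrak{g}_i$ is nonsplit for $i=1,2$, then the product by generators $\mathfrak{g}_1\underline{\times}\mathfrak{g}_2$ is an $(m_1+m_2+n_1n_2)$-dimensional nonsplit Lie algebra of nilindex $\max\{n(\mathfrak{g}_1),n(\mathfrak{g}_2)\}$.
   Context: All Lie algebras are finite-dimensional, complex, nilpotent and nonabelian. $C^1\mathfrak{g}=[\mathfrak{g},\mathfrak{g}]$, $C^{k+1}\mathfrak{g}=[\mathfrak{g},C^k\mathfrak{g}]$; the nilindex $n(\mathfrak{g})$ is the length of this central descending sequence (least $k$ with $C^k\mathfrak{g}=0$). A Lie algebra is nonsplit if it is not the direct sum of two nonzero ideals. Product by generators: take bases $\{X_1,\dots,X_{m_1}\}$ of $\mathfrak{g}_1$ and $\{X'_1,\dots,X'_{m_2}\}$ of $\mathfrak{g}_2$ such that $X_1,\dots,X_{n_1}$ generate $\mathfrak{g}_1$ and $X_{n_1+1},\dots,X_{m_1}$ span $C^1\mathfrak{g}_1$, and similarly $X'_1,\dots,X'_{n_2}$ generate $\mathfrak{g}_2$ and the remaining $X'_j$ span $C^1\mathfrak{g}_2$. Then $\mathfrak{g}_1\underline{\times}\mathfrak{g}_2$ is the Lie algebra on $\mathfrak{g}_1\oplus\mathfrak{g}_2\oplus\langle Z_1,\dots,Z_{n_1n_2}\rangle$ with the brackets of $\mathfrak{g}_1$ and of $\mathfrak{g}_2$, $[X_i,X'_j]=Z_{(i-1)n_2+j}$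 for $1\le i\le n_1$, $1\le j\le n_2$, $[X_i,X'_j]=0$ if $i>n_1$ or $j>n_2$, and the $Z_k$ central (the central extension of $\mathfrak{g}_1\oplus\mathfrak{g}_2$ by the corresponding 2-cocycle). *)

(* Defs.v *)
From HB Require Import structures.
From mathcomp Require Import all_boot all_order all_algebra.
Set Implicit Arguments. Unset Strict Implicit. Unset Printing Implicit Defensive.
Import Order.TTheory GRing.Theory Num.Theory.
Local Open Scope ring_scope.

(* A bilinear bracket on C^m, given by [e_i, e_j] = L i j. *)
Definition lie_str (C : fieldType) (m : nat) := 'I_m -> 'I_m -> 'rV[C]_m.

Section Lie.
Variables (C : fieldType) (m : nat) (L : lie_str C m).

Definition lbr (u v : 'rV[C]_m) : 'rV[C]_m :=
  \sum_(i < m) \sum_(j < m) (u 0 i * v 0 j) *: L i j.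

Definition is_lie : Prop :=
  (forall u, lbr u u = 0) /\
  (forall u v w, lbr u (lbr v w) + lbr v (lbr w u) + lbr w (lbr u v) = 0).

Definition brsp (U V : 'M[C]_m) : 'M[C]_m :=
  (\sum_(i < m) \sum_(j < m) <<lbr (row i U) (row j V)>>)%MS.

Fixpoint lcs (k : nat) : 'M[C]_m :=
  match k with
  | 0 => 1%:M
  | k'.+1 => brsp 1%:M (lcs k')
  end.

Definition nilpotent : Prop := exists k, \rank (lcs k) = 0%N.
Definition nonabelian : Prop := \rank (lcs 1) != 0%N.

Definition is_nilindex (k : nat) : Prop :=
  \rank (lcs k) = 0%N /\ forall j, (j < k)%N -> \rank (lcs j) != 0%N.

Definition ideal (I : 'M[C]_m) : Prop :=
  forall u v, (v <= I)%MS -> (lbr u v <= I)%MS.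

Definition nonsplit : Prop :=
  ~ exists I J : 'M[C]_m,
      [/\ ideal I, ideal J, \rank I != 0%N, \rank J != 0%N &
          \rank (I :&: J)%MS = 0%N /\ row_full (I + J)%MS].

Definition generates p (S : 'M[C]_(p, m)) : Prop :=
  forall V : 'M[C]_m, (S <= V)%MS ->
    (forall u v, (u <= V)%MS -> (v <= V)%MS -> (lbr u v <= V)%MS) ->
    row_full V.

End Lie.

Definition headspan (C : fieldType) m n : 'M[C]_m :=
  \matrix_(i < m, j < m) ((i == j) && (i < n)%N)%:R.
Definition tailspan (C : fieldType) m n : 'M[C]_m :=
  \matrix_(i < m, j < m) ((i == j) && (n <= i)%N)%:R.

(* the basis vector Z_{a n2 + b} (0-based indices) of C^(n1 n2), if a<n1, b<n2 *)
Definition zvec (C : fieldType) n1 n2 (a b : nat) : 'rV[C]_(n1 * n2) :=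
  \row_(k < n1 * n2) [&& (a < n1)%N, (b < n2)%N & (k == a * n2 + b :> nat)]%:R.

(* product by generators on g1 (+) g2 (+) <Z_1..Z_{n1 n2}> *)
Definition prodgen (C : fieldType) m1 m2 n1 n2
    (L1 : lie_str C m1) (L2 : lie_str C m2) : lie_str C (m1 + m2 + n1 * n2) :=
  fun i j =>
  match split i, split j with
  | inl i', inl j' =>
     match split i', split j' with
     | inl a, inl b => row_mx (row_mx (L1 a b) 0) 0
     | inr a, inr b => row_mx (row_mx 0 (L2 a b)) 0
     | inl a, inr b => row_mx 0 (zvec C n1 n2 a b)
     | inr b, inl a => - row_mx 0 (zvec C n1 n2 a b)
     end
  | _, _ => 0
  end.

Arguments prodgen {C m1 m2} n1 n2 L1 L2.

(* Main.v *)
Require Import Defs.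
From HB Require Import structures.
From mathcomp Require Import all_boot all_order all_algebra.
From mathcomp Require Import zify.
Set Implicit Arguments. Unset Strict Implicit. Unset Printing Implicit Defensive.
Import Order.TTheory GRing.Theory Num.Theory.
Local Open Scope ring_scope.

Module A.
Local Open Scope ring_scope.

Section Gen.
Variables (C : fieldType) (m : nat) (L : lie_str C m).
Local Notation lbr := (lbr L).

Lemma lbrDl u u' v : lbr (u + u') v = lbr u v + lbr u' v.
Proof.
rewrite /Defs.lbr -big_split; apply: eq_bigr => i _.
rewrite -big_split; apply: eq_bigr => j _; by rewrite mxE mulrDl scalerDl.
Qed.
Lemma lbrDr u v v' : lbr u (v + v') = lbr u v + lbr u v'.
Proof.
rewrite /Defs.lbr -big_split; apply: eq_bigr => i _.
rewrite -big_split; apply: eq_bigr => j _; by rewrite mxE mulrDr scalerDl.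
Qed.
Lemma lbrZl a u v : lbr (a *: u) v = a *: lbr u v.
Proof.
rewrite /Defs.lbr scaler_sumr; apply: eq_bigr => i _.
rewrite scaler_sumr; apply: eq_bigr => j _; by rewrite mxE scalerA mulrA.
Qed.
Lemma lbrZr a u v : lbr u (a *: v) = a *: lbr u v.
Proof.
rewrite /Defs.lbr scaler_sumr; apply: eq_bigr => i _.
rewrite scaler_sumr; apply: eq_bigr => j _.
by rewrite mxE scalerA mulrCA.
Qed.
Lemma lbr0l v : lbr 0 v = 0.
Proof. by have := lbrZl 0 0 v; rewrite !scale0r. Qed.
Lemma lbr0r u : lbr u 0 = 0.
Proof. by have := lbrZr 0 u 0; rewrite !scale0r. Qed.
Lemma lbrNl u v : lbr (- u) v = - lbr u v.
Proof. by rewrite -scaleN1r lbrZl scaleN1r. Qed.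
Lemma lbrNr u v : lbr u (- v) = - lbr u v.
Proof. by rewrite -scaleN1r lbrZr scaleN1r. Qed.
Lemma lbr_suml (I : Type) (r : seq I) (P : pred I) (F : I -> 'rV_m) v :
  lbr (\sum_(k <- r | P k) F k) v = \sum_(k <- r | P k) lbr (F k) v.
Proof. exact: (big_morph _ (fun x y => lbrDl x y v) (lbr0l v)). Qed.
Lemma lbr_sumr (I : Type) (r : seq I) (P : pred I) (F : I -> 'rV_m) u :
  lbr u (\sum_(k <- r | P k) F k) = \sum_(k <- r | P k) lbr u (F k).
Proof. exact: (big_morph _ (fun x y => lbrDr u x y) (lbr0r u)). Qed.

Lemma lbr_anti : (forall u, lbr u u = 0) -> forall u v, lbr u v = - lbr v u.
Proof.
move=> h u v; apply/eqP; rewrite -subr_eq0 opprK.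
have := h (u + v); rewrite lbrDl !lbrDr !h add0r addr0 => ->; by [].
Qed.

Lemma lbr_brsp (U V : 'M_m) u v :
  (u <= U)%MS -> (v <= V)%MS -> (lbr u v <= brsp L U V)%MS.
Proof.
move=> /submxP[a ->] /submxP[b ->].
rewrite !mulmx_sum_row lbr_suml; apply: summx_sub => i _.
rewrite lbr_sumr; apply: summx_sub => j _.
rewrite lbrZl lbrZr; do 2 apply: scalemx_sub.
rewrite /brsp; apply: (sumsmx_sup i) => //; apply: (sumsmx_sup j) => //.
by rewrite genmxE.
Qed.

Lemma brsp_sub p (U V : 'M_m) (W : 'M_(p, m)) :
  (forall i j, (lbr (row i U) (row j V) <= W)%MS) -> (brsp L U V <= W)%MS.
Proof.
move=> h; apply/sumsmx_subP => i _; apply/sumsmx_subP => j _.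
by rewrite genmxE.
Qed.

Lemma brsp_mono (U V U' V' : 'M_m) :
  (U <= U')%MS -> (V <= V')%MS -> (brsp L U V <= brsp L U' V')%MS.
Proof.
move=> hU hV; apply: brsp_sub => i j; apply: lbr_brsp.
  exact: submx_trans (row_sub i U) hU.
exact: submx_trans (row_sub j V) hV.
Qed.

Lemma lcs_decr k : (lcs L k.+1 <= lcs L k)%MS.
Proof.
elim: k => [|k IH] /=; first exact: submx1.
exact: brsp_mono (submx_refl _) IH.
Qed.

Lemma lcs_anti i j : (i <= j)%N -> (lcs L j <= lcs L i)%MS.
Proof.
move=> /subnK <-; elim: (j - i)%N => [|d IH]; first by rewrite add0n.
by rewrite addSn; apply: submx_trans (lcs_decr _) IH.
Qed.

Lemma lbr_delta i j : lbr (delta_mx 0 i) (delta_mx 0 j) = L i j.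
Proof.
rewrite /Defs.lbr (bigD1 i) //=.
rewrite [X in _ + X]big1 => [|k hk]; last first.
  by apply: big1 => l _; rewrite !mxE (negbTE hk) andbF mul0r scale0r.
rewrite addr0 (bigD1 j) //= [X in _ + X]big1 => [|k hk]; last first.
  by rewrite !mxE (negbTE hk) andbF mulr0 scale0r.
by rewrite !mxE !eqxx mulr1 scale1r addr0.
Qed.

End Gen.

End A.
Import A.

Module B.
Local Open Scope ring_scope.

Section Prod.
Variables (C : fieldType) (m1 m2 n1 n2 : nat) (L1 : lie_str C m1) (L2 : lie_str C m2).
Local Notation m := (m1 + m2 + n1 * n2)%N.
Local Notation L := (prodgen n1 n2 L1 L2).

Definition blk p (a : 'M[C]_(p, m1)) (b : 'M[C]_(p, m2)) (c : 'M[C]_(p, n1 * n2)) : 'M[C]_(p, m) :=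
  row_mx (row_mx a b) c.
Definition X1 (u : 'rV[C]_m) : 'rV_m1 := lsubmx (lsubmx u).
Definition X2 (u : 'rV[C]_m) : 'rV_m2 := rsubmx (lsubmx u).
Definition X3 (u : 'rV[C]_m) : 'rV_(n1 * n2) := rsubmx u.
Definition ll (a : 'I_m1) : 'I_m := lshift (n1 * n2) (lshift m2 a).
Definition lr (b : 'I_m2) : 'I_m := lshift (n1 * n2) (rshift m1 b).
Definition rr (c : 'I_(n1 * n2)) : 'I_m := rshift (m1 + m2) c.

Lemma blkK u : blk (X1 u) (X2 u) (X3 u) = u.
Proof. by rewrite /blk /X1 /X2 /X3 !hsubmxK. Qed.
Lemma X1blk a b c : X1 (blk a b c) = a. Proof. by rewrite /X1 /blk !row_mxKl. Qed.
Lemma X2blk a b c : X2 (blk a b c) = b. Proof. by rewrite /X2 /blk row_mxKl row_mxKr. Qed.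
Lemma X3blk a b c : X3 (blk a b c) = c. Proof. by rewrite /X3 /blk row_mxKr. Qed.
Lemma blkD p (a a' : 'M_(p, m1)) b b' c c' :
  blk a b c + blk a' b' c' = blk (a + a') (b + b') (c + c').
Proof. by rewrite /blk !add_row_mx. Qed.
Lemma blkZ p k (a : 'M_(p, m1)) b c : k *: blk a b c = blk (k *: a) (k *: b) (k *: c).
Proof. by rewrite /blk !scale_row_mx. Qed.
Lemma blkN p (a : 'M_(p, m1)) b c : - blk a b c = blk (- a) (- b) (- c).
Proof. by rewrite /blk !opp_row_mx. Qed.
Lemma blk0 p : blk 0 0 0 = 0 :> 'M_(p, m).
Proof. by rewrite /blk !row_mx0. Qed.
Lemma blk_sum p (I : Type) (r : seq I) (P : pred I) (F : I -> 'M_(p, m1)) G H :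
  \sum_(i <- r | P i) blk (F i) (G i) (H i) =
  blk (\sum_(i <- r | P i) F i) (\sum_(i <- r | P i) G i) (\sum_(i <- r | P i) H i).
Proof.
elim: r => [|i r IH]; first by rewrite !big_nil blk0.
rewrite !big_cons; case: (P i) => //; by rewrite IH blkD.
Qed.
Lemma blk_ll p (a : 'M_(p, m1)) b c i k : blk a b c i (ll k) = a i k.
Proof. by rewrite /blk /ll !row_mxEl. Qed.
Lemma blk_lr p (a : 'M_(p, m1)) b c i k : blk a b c i (lr k) = b i k.
Proof. by rewrite /blk /lr row_mxEl row_mxEr. Qed.
Lemma blk_rr p (a : 'M_(p, m1)) b c i k : blk a b c i (rr k) = c i k.
Proof. by rewrite /blk /rr row_mxEr. Qed.

Lemma splitl p q (i : 'I_p) : split (lshift q i) = inl i.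
Proof. exact: (unsplitK (inl i)). Qed.
Lemma splitr p q (i : 'I_q) : split (rshift p i) = inr i.
Proof. exact: (unsplitK (inr i)). Qed.

Lemma L_ll_ll a b : L (ll a) (ll b) = blk (L1 a b) 0 0.
Proof. by rewrite /prodgen /ll !splitl. Qed.
Lemma L_lr_lr a b : L (lr a) (lr b) = blk 0 (L2 a b) 0.
Proof. by rewrite /prodgen /lr !splitl !splitr. Qed.
Lemma L_ll_lr a b : L (ll a) (lr b) = blk 0 0 (zvec C n1 n2 a b).
Proof. by rewrite /prodgen /ll /lr !splitl splitr /blk row_mx0. Qed.
Lemma L_lr_ll b a : L (lr b) (ll a) = - blk 0 0 (zvec C n1 n2 a b).
Proof. by rewrite /prodgen /ll /lr !splitl splitr /blk row_mx0. Qed.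
Lemma L_rr_l c j : L (rr c) j = 0.
Proof. by rewrite /prodgen /rr splitr. Qed.
Lemma L_l_rr i c : L i (rr c) = 0.
Proof. by rewrite /prodgen /rr splitr; case: (split i) => // ?; case: split. Qed.

Lemma sum3 (F : 'I_m -> 'rV[C]_m) :
  \sum_(i < m) F i = \sum_(a < m1) F (ll a) + \sum_(b < m2) F (lr b) + \sum_(c < n1 * n2) F (rr c).
Proof. by rewrite !big_split_ord. Qed.

End Prod.

End B.
Import B.

Module Bp.
Local Open Scope ring_scope.

Section Prod2.
Variables (C : fieldType) (m1 m2 n1 n2 : nat) (L1 : lie_str C m1) (L2 : lie_str C m2).
Local Notation m := (m1 + m2 + n1 * n2)%N.
Local Notation L := (prodgen n1 n2 L1 L2).
Local Notation blk := (@blk C m1 m2 n1 n2 _).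
Local Notation ll := (@ll m1 m2 n1 n2).
Local Notation lr := (@lr m1 m2 n1 n2).
Local Notation rr := (@rr m1 m2 n1 n2).

Definition Zterm (x : 'rV[C]_m1) (y : 'rV[C]_m2) : 'rV[C]_(n1 * n2) :=
  \sum_(a < m1) \sum_(b < m2) (x 0 a * y 0 b) *: zvec C n1 n2 a b.

Section Terms.
Variables (x : 'rV[C]_m1) (y : 'rV[C]_m2) (z : 'rV[C]_(n1 * n2)).
Variables (x' : 'rV[C]_m1) (y' : 'rV[C]_m2) (z' : 'rV[C]_(n1 * n2)).
Let u := blk x y z.
Let v := blk x' y' z'.

Lemma T11 : \sum_(i < m1) \sum_(j < m1) (u 0 (ll i) * v 0 (ll j)) *: L (ll i) (ll j)
  = blk (lbr L1 x x') 0 0.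
Proof.
transitivity (\sum_(i < m1) \sum_(j < m1) blk ((x 0 i * x' 0 j) *: L1 i j) 0 0).
  apply: eq_bigr => i _; apply: eq_bigr => j _.
  by rewrite /u /v !blk_ll L_ll_ll blkZ !scaler0.
under eq_bigr => i _ do rewrite blk_sum.
by rewrite blk_sum !big1_eq.
Qed.
Lemma T22 : \sum_(i < m2) \sum_(j < m2) (u 0 (lr i) * v 0 (lr j)) *: L (lr i) (lr j)
  = blk 0 (lbr L2 y y') 0.
Proof.
transitivity (\sum_(i < m2) \sum_(j < m2) blk 0 ((y 0 i * y' 0 j) *: L2 i j) 0).
  apply: eq_bigr => i _; apply: eq_bigr => j _.
  by rewrite /u /v !blk_lr L_lr_lr blkZ !scaler0.
under eq_bigr => i _ do rewrite blk_sum.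
by rewrite blk_sum !big1_eq.
Qed.
Lemma T12 : \sum_(i < m1) \sum_(j < m2) (u 0 (ll i) * v 0 (lr j)) *: L (ll i) (lr j)
  = blk 0 0 (Zterm x y').
Proof.
transitivity (\sum_(i < m1) \sum_(j < m2) blk 0 0 ((x 0 i * y' 0 j) *: zvec C n1 n2 i j)).
  apply: eq_bigr => i _; apply: eq_bigr => j _.
  by rewrite /u /v blk_ll blk_lr L_ll_lr blkZ !scaler0.
under eq_bigr => i _ do rewrite blk_sum.
by rewrite blk_sum !big1_eq.
Qed.
Lemma T21 : \sum_(i < m2) \sum_(j < m1) (u 0 (lr i) * v 0 (ll j)) *: L (lr i) (ll j)
  = blk 0 0 (- Zterm x' y).
Proof.
transitivity (\sum_(i < m2) \sum_(j < m1) blk 0 0 (- ((x' 0 j * y 0 i) *: zvec C n1 n2 j i))).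
  apply: eq_bigr => i _; apply: eq_bigr => j _.
  by rewrite /u /v blk_ll blk_lr L_lr_ll scalerN blkZ blkN !scaler0 !oppr0 [y 0 i * _]mulrC.
under eq_bigr => i _ do rewrite blk_sum.
rewrite blk_sum !big1_eq /Zterm exchange_big /= -sumrN.
by congr blk; apply: eq_bigr => i _; rewrite sumrN.
Qed.
Lemma T_r1 p (f : 'I_p -> 'I_m) : \sum_(i < p) \sum_(j < n1 * n2) (u 0 (f i) * v 0 (rr j)) *: L (f i) (rr j) = 0.
Proof. by apply: big1 => i _; apply: big1 => j _; rewrite L_l_rr scaler0. Qed.
Lemma T_r2 p (f : 'I_p -> 'I_m) : \sum_(i < n1 * n2) \sum_(j < p) (u 0 (rr i) * v 0 (f j)) *: L (rr i) (f j) = 0.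
Proof. by apply: big1 => i _; apply: big1 => j _; rewrite L_rr_l scaler0. Qed.
End Terms.
Lemma lbr_prod x y z x' y' z' :
  lbr L (blk x y z) (blk x' y' z') =
  blk (lbr L1 x x') (lbr L2 y y') (Zterm x y' - Zterm x' y).
Proof.
rewrite /Defs.lbr sum3.
under eq_bigr => a _ do rewrite sum3.
under [X in _ + X + _]eq_bigr => a _ do rewrite sum3.
under [X in _ + X]eq_bigr => a _ do rewrite sum3.
rewrite !big_split /= T11 T22 T12 T21 !T_r1 !T_r2 !addr0.
by rewrite !blkD !addr0 !add0r.
Qed.
End Prod2.

End Bp.
Import Bp.

Module Cz.
Local Open Scope ring_scope.

Section Tail.
Variables (C : fieldType) (p n : nat).
Lemma tail_head0 (v : 'rV[C]_p) : (v <= tailspan C p n)%MS -> forall k : 'I_p, (k < n)%N -> v 0 k = 0.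
Proof.
move=> /submxP[w ->] k hk; rewrite !mxE; apply: big1 => i _; rewrite mxE.
case: eqP => [->|_]; last by rewrite mulr0.
by rewrite leqNgt hk mulr0.
Qed.
Lemma head0_tail (v : 'rV[C]_p) : (forall k : 'I_p, (k < n)%N -> v 0 k = 0) -> (v <= tailspan C p n)%MS.
Proof.
move=> h; suff -> : v = v *m tailspan C p n by apply: submxMl.
apply/rowP => k; rewrite !mxE (bigD1 k) //= big1 => [|i hi]; last by rewrite mxE (negbTE hi) mulr0.
rewrite mxE eqxx /= addr0; case: (leqP n k) => hk; first by rewrite mulr1.
by rewrite h // mul0r.
Qed.
End Tail.

Section Z.
Variables (C : fieldType) (m1 m2 n1 n2 : nat).
Local Notation Zterm := (@Zterm C m1 m2 n1 n2).

Lemma zvec_outl (a b : nat) : ~~ (a < n1)%N -> zvec C n1 n2 a b = 0.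
Proof. by move=> h; apply/rowP => k; rewrite !mxE (negbTE h). Qed.
Lemma zvec_outr (a b : nat) : ~~ (b < n2)%N -> zvec C n1 n2 a b = 0.
Proof. by move=> h; apply/rowP => k; rewrite !mxE (negbTE h) andbF. Qed.

Lemma Zterm_h0l (x : 'rV[C]_m1) (y : 'rV[C]_m2) : (forall a : 'I_m1, (a < n1)%N -> x 0 a = 0) -> Zterm x y = 0.
Proof.
move=> h; apply: big1 => a _; apply: big1 => b _.
case: (ltnP a n1) => ha; first by rewrite h // mul0r scale0r.
by rewrite zvec_outl ?scaler0 // -leqNgt.
Qed.
Lemma Zterm_h0r (x : 'rV[C]_m1) (y : 'rV[C]_m2) : (forall b : 'I_m2, (b < n2)%N -> y 0 b = 0) -> Zterm x y = 0.
Proof.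
move=> h; apply: big1 => a _; apply: big1 => b _.
case: (ltnP b n2) => hb; first by rewrite h // mulr0 scale0r.
by rewrite zvec_outr ?scaler0 // -leqNgt.
Qed.
Lemma Zterm0l y : Zterm 0 y = 0.
Proof. by apply: Zterm_h0l => a _; rewrite mxE. Qed.
Lemma Zterm0r x : Zterm x 0 = 0.
Proof. by apply: Zterm_h0r => a _; rewrite mxE. Qed.

Lemma Zterm_coord (x : 'rV[C]_m1) (y : 'rV[C]_m2) (a : 'I_m1) (b : 'I_m2) (k : 'I_(n1 * n2)) :
  (a < n1)%N -> (b < n2)%N -> val k = (a * n2 + b)%N -> Zterm x y 0 k = x 0 a * y 0 b.
Proof.
move=> ha hb hk; rewrite /Bp.Zterm summxE (bigD1 a) //= [X in _ + X]big1 => [|a' ha']; last first.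
  rewrite summxE; apply: big1 => b' _; rewrite !mxE.
  case: (ltnP a' n1) => h1 //=; last by rewrite mulr0.
  case: (ltnP b' n2) => h2 //=; last by rewrite mulr0.
  case: eqP => //= e; last by rewrite mulr0.
  exfalso; move/negP: ha'; apply; apply/eqP/val_inj => /=.
  have := congr1 (fun t => t %/ n2)%N e; rewrite hk.
  have n2p : (0 < n2)%N by apply: leq_ltn_trans hb.
  by rewrite !divnMDl // !divn_small // !addn0.
rewrite addr0 summxE (bigD1 b) //= [X in _ + X]big1 => [|b' hb']; last first.
  rewrite !mxE; case: (ltnP b' n2) => h2 //=; rewrite ?andbF ?mulr0 //.
  rewrite ha /=; case: eqP => //= e; last by rewrite mulr0.
  exfalso; move/negP: hb'; apply; apply/eqP/val_inj => /=.
  have := congr1 (fun t => t %% n2)%N e; rewrite hk.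
  by rewrite !modnMDl !modn_small.
by rewrite !mxE ha hb hk eqxx addr0 mulr1.
Qed.

Lemma zvec_delta (a b : nat) (k : 'I_(n1 * n2)) :
  (a < n1)%N -> (b < n2)%N -> val k = (a * n2 + b)%N -> zvec C n1 n2 a b = delta_mx 0 k.
Proof.
move=> ha hb hk; have E : (a * n2 + b)%R = val k by rewrite hk.
by apply/rowP => k'; rewrite !mxE ha hb /= E.
Qed.

Lemma Zterm_delta (a : 'I_m1) (b : 'I_m2) :
  Zterm (delta_mx 0 a) (delta_mx 0 b) = zvec C n1 n2 a b.
Proof.
rewrite /Bp.Zterm (bigD1 a) //= [X in _ + X]big1 => [|a' ha']; last first.
  by apply: big1 => b' _; rewrite !mxE (negbTE ha') andbF mul0r scale0r.
rewrite addr0 (bigD1 b) //= [X in _ + X]big1 => [|b' hb']; last first.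
  by rewrite !mxE (negbTE hb') andbF mulr0 scale0r.
by rewrite !mxE !eqxx mulr1 scale1r addr0.
Qed.
End Z.

End Cz.
Import Cz.

Module D.
Local Open Scope ring_scope.

Section Lie.
Variables (C : fieldType) (m1 m2 n1 n2 : nat) (L1 : lie_str C m1) (L2 : lie_str C m2).
Hypotheses (t1 : (lcs L1 1 <= tailspan C m1 n1)%MS) (t2 : (lcs L2 1 <= tailspan C m2 n2)%MS).
Local Notation L := (prodgen n1 n2 L1 L2).

Lemma lbr1_h0 x x' : forall a : 'I_m1, (a < n1)%N -> lbr L1 x x' 0 a = 0.
Proof. apply: tail_head0; apply: submx_trans t1; apply: lbr_brsp; exact: submx1. Qed.
Lemma lbr2_h0 x x' : forall a : 'I_m2, (a < n2)%N -> lbr L2 x x' 0 a = 0.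
Proof. apply: tail_head0; apply: submx_trans t2; apply: lbr_brsp; exact: submx1. Qed.

Lemma is_lie_prod : is_lie L1 -> is_lie L2 -> is_lie L.
Proof.
case=> a1 j1 [a2 j2]; split.
  by move=> u; rewrite -(blkK u) lbr_prod a1 a2 subrr blk0.
move=> u v w; rewrite -(blkK u) -(blkK v) -(blkK w) !lbr_prod.
rewrite !(@Zterm_h0l _ _ _ _ _ _ _ (lbr1_h0 _ _)) !(@Zterm_h0r _ _ _ _ _ _ _ (lbr2_h0 _ _)).
by rewrite !blkD j1 j2 !subrr !addr0 blk0.
Qed.
End Lie.

End D.
Import D.

Module E.
Local Open Scope ring_scope.

Lemma sumsmx_mulr_sub (F : fieldType) (I : finType) (P : pred I) n p q
  (A_ : I -> 'M[F]_n) (B : 'M_(n, p)) (W : 'M_(q, p)) :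
  (forall i, P i -> (A_ i *m B <= W)%MS) -> ((\sum_(i | P i) A_ i)%MS *m B <= W)%MS.
Proof.
move=> h; elim/big_rec: _ => [|i S Pi hS]; first by rewrite mul0mx sub0mx.
by rewrite addsmxMr addsmx_sub hS andbT h.
Qed.

Section Nil.
Variables (C : fieldType) (m1 m2 n1 n2 : nat) (L1 : lie_str C m1) (L2 : lie_str C m2).
Hypotheses (t1 : (lcs L1 1 <= tailspan C m1 n1)%MS) (t2 : (lcs L2 1 <= tailspan C m2 n2)%MS).
Local Notation m := (m1 + m2 + n1 * n2)%N.
Local Notation L := (prodgen n1 n2 L1 L2).
Local Notation blk := (@blk C m1 m2 n1 n2 _).

Definition M1 : 'M[C]_(m1, m) := blk 1%:M 0 0.
Definition M2 : 'M[C]_(m2, m) := blk 0 1%:M 0.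
Definition M3 : 'M[C]_(n1 * n2, m) := blk 0 0 1%:M.
Definition P1 : 'M[C]_(m, m1) := col_mx (col_mx 1%:M 0) 0.
Definition P2 : 'M[C]_(m, m2) := col_mx (col_mx 0 1%:M) 0.

Lemma mulM1 p (A : 'M_(p, m1)) : A *m M1 = blk A 0 0.
Proof. by rewrite /M1 /B.blk !mul_mx_row mulmx1 !mulmx0. Qed.
Lemma mulM2 p (A : 'M_(p, m2)) : A *m M2 = blk 0 A 0.
Proof. by rewrite /M2 /B.blk !mul_mx_row mulmx1 !mulmx0. Qed.
Lemma mulM3 p (A : 'M_(p, n1 * n2)) : A *m M3 = blk 0 0 A.
Proof. by rewrite /M3 /B.blk !mul_mx_row mulmx1 !mulmx0. Qed.
Lemma blkP1 p (a : 'M_(p, m1)) b c : blk a b c *m P1 = a.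
Proof. by rewrite /P1 /B.blk !mul_row_col mulmx1 !mulmx0 !addr0. Qed.
Lemma blkP2 p (a : 'M_(p, m1)) b c : blk a b c *m P2 = b.
Proof. by rewrite /P2 /B.blk !mul_row_col mulmx1 !mulmx0 add0r addr0. Qed.
Lemma blk_split p (a : 'M_(p, m1)) b c : blk a b c = a *m M1 + b *m M2 + c *m M3.
Proof. by rewrite mulM1 mulM2 mulM3 !blkD !addr0 !add0r. Qed.

Lemma decomp p q (v : 'rV_m) (A : 'M_(p, m1)) (B : 'M_(q, m2)) :
  (v <= A *m M1 + B *m M2 + M3)%MS -> (X1 v <= A)%MS /\ (X2 v <= B)%MS.
Proof.
move=> hv; split.
  rewrite -[X1 v](blkP1 (X1 v) (X2 v) (X3 v)) blkK.
  apply: submx_trans (submxMr P1 hv) _.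
  rewrite addsmxMr addsmx_sub addsmxMr addsmx_sub -!mulmxA /M1 /M2 /M3 !blkP1 mulmx1 mulmx0 !sub0mx.
  by rewrite submx_refl.
rewrite -[X2 v](blkP2 (X1 v) (X2 v) (X3 v)) blkK.
apply: submx_trans (submxMr P2 hv) _.
rewrite addsmxMr addsmx_sub addsmxMr addsmx_sub -!mulmxA /M1 /M2 /M3 !blkP2 mulmx1 mulmx0 !sub0mx.
by rewrite submx_refl.
Qed.

Lemma lbr_emb1 a b : lbr L (blk a 0 0) (blk b 0 0) = blk (lbr L1 a b) 0 0.
Proof. by rewrite lbr_prod lbr0r !Zterm0r subrr. Qed.
Lemma lbr_emb2 a b : lbr L (blk 0 a 0) (blk 0 b 0) = blk 0 (lbr L2 a b) 0.
Proof. by rewrite lbr_prod lbr0r !Zterm0l subrr. Qed.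

Lemma emb1_lcs j : (lcs L1 j *m M1 <= lcs L j)%MS.
Proof.
elim: j => [|j IH] /=; first exact: submx1.
apply: sumsmx_mulr_sub => i _; apply: sumsmx_mulr_sub => k _.
rewrite (eqmxMr _ (genmxE _)) mulM1 -lbr_emb1; apply: lbr_brsp; first exact: submx1.
by rewrite -mulM1 -row_mul; apply: submx_trans (row_sub _ _) IH.
Qed.
Lemma emb2_lcs j : (lcs L2 j *m M2 <= lcs L j)%MS.
Proof.
elim: j => [|j IH] /=; first exact: submx1.
apply: sumsmx_mulr_sub => i _; apply: sumsmx_mulr_sub => k _.
rewrite (eqmxMr _ (genmxE _)) mulM2 -lbr_emb2; apply: lbr_brsp; first exact: submx1.
by rewrite -mulM2 -row_mul; apply: submx_trans (row_sub _ _) IH.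
Qed.

Lemma step (A : 'M_m1) (B : 'M_m2) u v :
  (A <= lcs L1 1)%MS -> (B <= lcs L2 1)%MS -> (v <= A *m M1 + B *m M2 + M3)%MS ->
  (lbr L u v <= brsp L1 1%:M A *m M1 + brsp L2 1%:M B *m M2)%MS.
Proof.
move=> hA hB /decomp[h1 h2].
rewrite -(blkK u) -(blkK v) lbr_prod.
have z1 : Zterm n1 n2 (X1 u) (X2 v) = 0.
  apply: Zterm_h0r => b hb; apply: (tail_head0 _ hb).
  by apply: submx_trans t2; apply: submx_trans hB.
have z2 : Zterm n1 n2 (X1 v) (X2 u) = 0.
  apply: Zterm_h0l => a ha; apply: (tail_head0 _ ha).
  by apply: submx_trans t1; apply: submx_trans hA.
rewrite z1 z2 subrr blk_split mul0mx addr0.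
apply: addmx_sub_adds; apply: submxMr; apply: lbr_brsp => //; exact: submx1.
Qed.

Lemma base : (lcs L 1 <= lcs L1 1 *m M1 + lcs L2 1 *m M2 + M3)%MS.
Proof.
apply: brsp_sub => i j; set u := row i _; set v := row j _.
rewrite -(blkK u) -(blkK v) lbr_prod blk_split.
apply: addmx_sub_adds; last exact: submxMl.
apply: addmx_sub_adds; apply: submxMr; apply: lbr_brsp; exact: submx1.
Qed.

Lemma upper j : (lcs L j.+2 <= lcs L1 j.+2 *m M1 + lcs L2 j.+2 *m M2)%MS.
Proof.
elim: j => [|j IH].
  apply: brsp_sub => i k; apply: step => //.
  by apply: submx_trans (row_sub _ _) base.
apply: brsp_sub => i k; apply: step.
- by change (lcs L1 j.+2 <= lcs L1 1)%MS; apply: lcs_anti.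
- by change (lcs L2 j.+2 <= lcs L2 1)%MS; apply: lcs_anti.
apply: submx_trans (row_sub _ _) _; apply: submx_trans IH _; exact: addsmxSl.
Qed.

Lemma lcs_zero a b j : \rank (lcs L1 a) = 0%N -> \rank (lcs L2 b) = 0%N ->
  (a <= j.+2)%N -> (b <= j.+2)%N -> lcs L j.+2 = 0.
Proof.
move=> ha hb haj hbj.
have z1 : lcs L1 j.+2 = 0.
  apply/eqP; rewrite -submx0; apply: submx_trans (lcs_anti _ haj) _.
  by rewrite submx0 -mxrank_eq0 ha.
have z2 : lcs L2 j.+2 = 0.
  apply/eqP; rewrite -submx0; apply: submx_trans (lcs_anti _ hbj) _.
  by rewrite submx0 -mxrank_eq0 hb.
apply/eqP; rewrite -submx0; apply: submx_trans (upper j) _.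
by rewrite z1 z2 !mul0mx addsmx_sub !sub0mx.
Qed.

Lemma rank_emb1 (A : 'M_m1) : (\rank A <= \rank (A *m M1))%N.
Proof.
by rewrite mulM1 -{1}(blkP1 A 0 0) mxrankM_maxl.
Qed.
Lemma rank_emb2 (A : 'M_m2) : (\rank A <= \rank (A *m M2))%N.
Proof. by rewrite mulM2 -{1}(blkP2 0 A 0) mxrankM_maxl. Qed.

Lemma nilindex_prod k1 k2 : nonabelian L1 -> nonabelian L2 ->
  is_nilindex L1 k1 -> is_nilindex L2 k2 -> is_nilindex L (maxn k1 k2).
Proof.
move=> na1 na2 [z1 p1] [z2 p2].
have k1g : (2 <= k1)%N.
  rewrite ltnNge; apply/negP => hk; move/negP: na1; apply.
  by rewrite -leqn0 -[X in (_ <= X)%N]z1 mxrankS //; apply: lcs_anti.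
have := leq_maxl k1 k2; have := leq_maxr k1 k2.
case E : (maxn k1 k2) => [|[|j]] h2 h1; try by move: (leq_trans k1g h1).
split.
  by rewrite (lcs_zero z1 z2 h1 h2) mxrank0.
move=> i; rewrite -E leq_max => /orP[hi|hi].
  rewrite -lt0n; apply: leq_trans (leq_trans (rank_emb1 _) (mxrankS (emb1_lcs i))).
  by rewrite lt0n p1.
rewrite -lt0n; apply: leq_trans (leq_trans (rank_emb2 _) (mxrankS (emb2_lcs i))).
by rewrite lt0n p2.
Qed.

Lemma nil_prod : nilpotent L1 -> nilpotent L2 -> exists K, lcs L K = 0.
Proof.
move=> [a ha] [b hb]; exists (a + b).+2.
apply: (lcs_zero ha hb).
  by apply: leq_trans (leq_addr b a) _; rewrite ltnW // ltnW.
by apply: leq_trans (leq_addl a b) _; rewrite ltnW // ltnW.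
Qed.
End Nil.

End E.
Import E.

Module F.
Local Open Scope ring_scope.

Section NS.
Variables (C : fieldType) (m1 m2 n1 n2 : nat) (L1 : lie_str C m1) (L2 : lie_str C m2).
Hypotheses (t1 : (lcs L1 1 <= tailspan C m1 n1)%MS) (t2 : (lcs L2 1 <= tailspan C m2 n2)%MS).
Hypotheses (t1' : (tailspan C m1 n1 <= lcs L1 1)%MS) (t2' : (tailspan C m2 n2 <= lcs L2 1)%MS).
Hypotheses (lie1 : is_lie L1) (lie2 : is_lie L2).
Hypotheses (nil1 : nilpotent L1) (nil2 : nilpotent L2).
Hypotheses (hn1 : (0 < n1)%N) (hn2 : (0 < n2)%N) (hm1 : (n1 <= m1)%N) (hm2 : (n2 <= m2)%N).
Local Notation m := (m1 + m2 + n1 * n2)%N.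
Local Notation L := (prodgen n1 n2 L1 L2).
Local Notation blk := (@blk C m1 m2 n1 n2 _).
Local Notation ll := (@ll m1 m2 n1 n2).
Local Notation lr := (@lr m1 m2 n1 n2).
Local Notation rr := (@rr m1 m2 n1 n2).

Definition head0 (v : 'rV[C]_m) :=
  (forall a : 'I_m1, (a < n1)%N -> v 0 (ll a) = 0) /\
  (forall b : 'I_m2, (b < n2)%N -> v 0 (lr b) = 0).

Lemma X1E (v : 'rV[C]_m) a : X1 v 0 a = v 0 (ll a).
Proof. by rewrite /X1 !mxE. Qed.
Lemma X2E (v : 'rV[C]_m) b : X2 v 0 b = v 0 (lr b).
Proof. by rewrite /X2 !mxE. Qed.

Lemma M3_lcs : (M3 C m1 m2 n1 n2 <= lcs L 1)%MS.
Proof.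
apply/row_subP => k; rewrite rowE mulM3.
have hk := ltn_ord k.
have ha : (k %/ n2 < m1)%N by apply: leq_trans hm1; nia.
have hb : (k %% n2 < m2)%N by apply: leq_trans hm2; rewrite ltn_pmod.
set a := Ordinal ha; set b := Ordinal hb.
have -> : blk 0 0 (delta_mx 0 k) = lbr L (blk (delta_mx 0 a) 0 0) (blk 0 (delta_mx 0 b) 0).
  rewrite lbr_prod lbr0r lbr0l Zterm0l subr0 Zterm_delta.
  rewrite (@zvec_delta C n1 n2 a b k) //=; first by rewrite ltn_divLR // mulnC.
    by rewrite ltn_pmod.
  exact: divn_eq.
apply: lbr_brsp; exact: submx1.
Qed.

Lemma head0_lcs v : head0 v -> (v <= lcs L 1)%MS.
Proof.
case=> h1 h2; rewrite -(blkK v) blk_split.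
apply: addmx_sub; first apply: addmx_sub.
- apply: submx_trans (emb1_lcs n1 n2 L1 L2 1); apply: submxMr.
  apply: submx_trans t1'; apply: head0_tail => k hk; by rewrite X1E h1.
- apply: submx_trans (emb2_lcs n1 n2 L1 L2 1); apply: submxMr.
  apply: submx_trans t2'; apply: head0_tail => k hk; by rewrite X2E h2.
apply: submx_trans M3_lcs; exact: submxMl.
Qed.

Lemma cross (I J : 'M[C]_m) : ideal L I -> ideal L J -> \rank (I :&: J)%MS = 0%N ->
  forall u v, (u <= I)%MS -> (v <= J)%MS -> lbr L u v = 0.
Proof.
move=> iI iJ hc u v hu hv.
have lieL := is_lie_prod t1 t2 lie1 lie2.
have h0 : (I :&: J)%MS = 0 by apply/eqP; rewrite -mxrank_eq0 hc.
apply/eqP; rewrite -submx0 -h0 sub_capmx iJ // andbT.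
rewrite (lbr_anti lieL.1) eqmx_opp; exact: iI.
Qed.

Lemma J_zero (I J : 'M[C]_m) : ideal L I -> ideal L J -> \rank (I :&: J)%MS = 0%N ->
  row_full (I + J)%MS -> (forall v, (v <= J)%MS -> head0 v) -> \rank J = 0%N.
Proof.
move=> iI iJ hc hf hJ.
have h0 : (I :&: J)%MS = 0 by apply/eqP; rewrite -mxrank_eq0 hc.
have cr := cross iI iJ hc.
have lieL := is_lie_prod t1 t2 lie1 lie2.
have hJ1 : (J <= lcs L 1)%MS by apply/row_subP => i; apply: head0_lcs; apply: hJ; exact: row_sub.
have BJ : (brsp L J J <= J)%MS by apply: brsp_sub => i j; apply: iJ; exact: row_sub.
have K1 : (lcs L 1 <= I + brsp L J J)%MS.
  apply: brsp_sub => i j.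
  have /sub_addsmxP[[p1 p2] /= ->] := submx_full (row i 1%:M) hf.
  have /sub_addsmxP[[q1 q2] /= ->] := submx_full (row j 1%:M) hf.
  rewrite !lbrDl !lbrDr (cr (p1 *m I) (q2 *m J)) ?submxMl // addr0.
  rewrite (lbr_anti lieL.1 (p2 *m J)) (cr (q1 *m I) (p2 *m J)) ?submxMl // oppr0 add0r.
  apply: addmx_sub_adds; first by apply: iI; exact: submxMl.
  by apply: lbr_brsp; exact: submxMl.
have all : forall k, (J <= lcs L k)%MS.
  elim=> [|k IH]; first exact: submx1.
  apply/row_subP => i; set v := row i J.
  have hv : (v <= J)%MS by exact: row_sub.
  have /sub_addsmxP[[a b] /= ev] := submx_trans hv (submx_trans hJ1 K1).
  have hb : (b *m brsp L J J <= J)%MS by apply: submx_trans (submxMl _ _) BJ.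
  have ha : a *m I = 0.
    apply/eqP; rewrite -submx0 -h0 sub_capmx submxMl /=.
    have -> : a *m I = v - b *m brsp L J J by rewrite ev addrK.
    by apply: addmx_sub => //; rewrite eqmx_opp.
  rewrite ev ha add0r; apply: submx_trans (submxMl _ _) _.
  change (brsp L J J <= brsp L 1%:M (lcs L k))%MS.
  by apply: brsp_mono => //; exact: submx1.
have [K hK] := nil_prod t1 t2 nil1 nil2.
apply/eqP; rewrite mxrank_eq0 -submx0 -hK; exact: all.
Qed.

Lemma star (I J : 'M[C]_m) : ideal L I -> ideal L J -> \rank (I :&: J)%MS = 0%N ->
  forall u v : 'rV[C]_m, (u <= I)%MS -> (v <= J)%MS -> forall (a : 'I_m1) (b : 'I_m2),
  (a < n1)%N -> (b < n2)%N -> u 0 (ll a) * v 0 (lr b) = v 0 (ll a) * u 0 (lr b).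
Proof.
move=> iI iJ hc u v hu hv a b ha hb.
have e := cross iI iJ hc hu hv.
have hk : (a * n2 + b < n1 * n2)%N by nia.
move: e; rewrite -(blkK u) -(blkK v) lbr_prod => /(congr1 (fun w : 'rV[C]_m => w 0 (rr (Ordinal hk)))).
rewrite blk_rr mxE [X in _ + X = _]mxE (Zterm_coord _ _ ha hb) // (Zterm_coord _ _ ha hb) //.
rewrite !X1E !X2E !blkK mxE => /eqP; rewrite subr_eq0 => /eqP //.
Qed.

Lemma solve0 (xi xj y : C) : xi + xj = 1 -> xi * - y = xj * y -> y = 0.
Proof.
move=> hs e; rewrite -[y]mulr1 -hs mulrDr [y * xj]mulrC -e mulrN mulrC addrN //.
Qed.

Lemma nonsplit_prod : nonsplit L.
Proof.
move=> [I [J [iI iJ rI rJ [hc hf]]]].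
have hcJ : \rank (J :&: I)%MS = 0%N by rewrite capmxC.
have hfJ : row_full (J + I)%MS by rewrite addsmxC.
have st := star iI iJ hc.
pose a0 : 'I_m1 := Ordinal (leq_trans hn1 hm1).
pose b0 : 'I_m2 := Ordinal (leq_trans hn2 hm2).
have /sub_addsmxP[[p1 p2] /= ex] := submx_full (blk (delta_mx 0 a0) 0 0 : 'rV[C]_m) hf.
have /sub_addsmxP[[q1 q2] /= ey] := submx_full (blk 0 (delta_mx 0 b0) 0 : 'rV[C]_m) hf.
set i := p1 *m I in ex; set j := p2 *m J in ex.
set i' := q1 *m I in ey; set j' := q2 *m J in ey.
have hi : (i <= I)%MS by exact: submxMl.
have hj : (j <= J)%MS by exact: submxMl.
have hi' : (i' <= I)%MS by exact: submxMl.
have hj' : (j' <= J)%MS by exact: submxMl.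
have cx : forall a, i 0 (ll a) + j 0 (ll a) = (a == a0)%:R.
  by move=> a; have := congr1 (fun w : 'rV[C]_m => w 0 (ll a)) ex; rewrite blk_ll !mxE /= => <-.
have cy : forall b, i 0 (lr b) + j 0 (lr b) = 0.
  by move=> b; have := congr1 (fun w : 'rV[C]_m => w 0 (lr b)) ex; rewrite blk_lr !mxE /= => <-.
have cx' : forall a, i' 0 (ll a) + j' 0 (ll a) = 0.
  by move=> a; have := congr1 (fun w : 'rV[C]_m => w 0 (ll a)) ey; rewrite blk_ll !mxE /= => <-.
have cy' : forall b, i' 0 (lr b) + j' 0 (lr b) = (b == b0)%:R.
  by move=> b; have := congr1 (fun w : 'rV[C]_m => w 0 (lr b)) ey; rewrite blk_lr !mxE /= => <-.
have xs : i 0 (ll a0) + j 0 (ll a0) = 1 by rewrite cx eqxx.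
have ys : i' 0 (lr b0) + j' 0 (lr b0) = 1 by rewrite cy' eqxx.
have yi0 : forall b : 'I_m2, (b < n2)%N -> i 0 (lr b) = 0.
  move=> b hb; apply: (solve0 xs).
  have := st _ _ hi hj a0 b hn1 hb.
  by have -> : j 0 (lr b) = - i 0 (lr b) by apply/eqP; rewrite -addr_eq0 addrC cy.
have yj0 : forall b : 'I_m2, (b < n2)%N -> j 0 (lr b) = 0.
  by move=> b hb; have := cy b; rewrite yi0 // add0r.
have xi0 : forall a : 'I_m1, (a < n1)%N -> i' 0 (ll a) = 0.
  move=> a ha; rewrite addrC in ys; apply: (solve0 ys).
  have := st _ _ hi' hj' a b0 ha hn2.
  have -> : j' 0 (ll a) = - i' 0 (ll a) by apply/eqP; rewrite -addr_eq0 addrC cx'.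
  by move=> e; rewrite mulrN [j' 0 (lr b0) * _]mulrC e mulNr opprK mulrC.
have xj0 : forall a : 'I_m1, (a < n1)%N -> j' 0 (ll a) = 0.
  by move=> a ha; have := cx' a; rewrite xi0 // add0r.
have [xi_nz | xi_z] := eqVneq (i 0 (ll a0)) 0; last first.
  (* J has zero head *)
  have yj'0 : j' 0 (lr b0) = 0.
    have := st _ _ hi hj' a0 b0 hn1 hn2; rewrite yi0 // mulr0 => /eqP.
    by rewrite mulf_eq0 (negbTE xi_z) /= => /eqP.
  have yi'1 : i' 0 (lr b0) = 1 by rewrite -ys yj'0 addr0.
  move/eqP: rJ; apply; apply: J_zero iI iJ hc hf _ => v hv; split.
    move=> a ha; have := st _ _ hi' hv a b0 ha hn2.
    by rewrite xi0 // mul0r yi'1 mulr1.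
  move=> b hb; have := st _ _ hi hv a0 b hn1 hb; rewrite yi0 // mulr0 => /eqP.
  by rewrite mulf_eq0 (negbTE xi_z) /= => /eqP.
(* I has zero head *)
have xj1 : j 0 (ll a0) = 1 by rewrite -xs xi_nz add0r.
have yi'0 : i' 0 (lr b0) = 0.
  by have := st _ _ hi' hj a0 b0 hn1 hn2; rewrite xi0 // mul0r xj1 mul1r.
have yj'1 : j' 0 (lr b0) = 1 by rewrite -ys yi'0 add0r.
move/eqP: rI; apply; apply: J_zero iJ iI hcJ hfJ _ => u hu; split.
  move=> a ha; have := st _ _ hu hj' a b0 ha hn2.
  by rewrite yj'1 mulr1 xj0 // mul0r.
move=> b hb; have := st _ _ hu hj a0 b hn1 hb.
by rewrite yj0 // mulr0 xj1 mul1r.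
Qed.

End NS.

End F.
Import F.

Lemma npos (C : fieldType) m n (L : lie_str C m) :
  generates L (headspan C m n) -> nonabelian L -> (0 < n)%N.
Proof.
case: n => // hg na.
have hs : headspan C m 0 = 0 by apply/matrixP => i j; rewrite !mxE andbF.
have := hg 0; rewrite hs submx_refl => /(_ isT).
have cl : forall u v : 'rV_m, (u <= (0 : 'M_m))%MS -> (v <= (0 : 'M_m))%MS -> (lbr L u v <= (0 : 'M_m))%MS.
  by move=> u v; rewrite !submx0 => /eqP-> /eqP->; rewrite lbr0l.
move=> /(_ cl); rewrite /row_full mxrank0 => /eqP m0.
have h : (\rank (lcs L 1) <= 0)%N by apply: leq_trans (rank_leq_col _) _; rewrite -m0.
by move: na; rewrite /nonabelian -lt0n ltnNge h.
Qed.

Theorem mainTheorem4 (C : numClosedFieldType) (m1 m2 n1 n2 : nat)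
    (L1 : lie_str C m1) (L2 : lie_str C m2) :
  is_lie L1 -> nilpotent L1 -> nonabelian L1 ->
  is_lie L2 -> nilpotent L2 -> nonabelian L2 ->
  (n1 <= m1)%N -> (n2 <= m2)%N ->
  generates L1 (headspan C m1 n1) -> (lcs L1 1 == tailspan C m1 n1)%MS ->
  generates L2 (headspan C m2 n2) -> (lcs L2 1 == tailspan C m2 n2)%MS ->
  nonsplit L1 -> nonsplit L2 ->
  let L := prodgen n1 n2 L1 L2 in
  is_lie L /\ nonsplit L /\
  forall k1 k2, is_nilindex L1 k1 -> is_nilindex L2 k2 ->
    is_nilindex L (maxn k1 k2).
Proof.
move=> lie1 nil1 na1 lie2 nil2 na2 hm1 hm2 g1 e1 g2 e2 _ _ L.
case/andP: e1 => t1 t1'; case/andP: e2 => t2 t2'.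
have hn1 := npos g1 na1; have hn2 := npos g2 na2.
split; first exact: is_lie_prod.
split; first exact: (nonsplit_prod t1 t2 t1' t2' lie1 lie2 nil1 nil2 hn1 hn2 hm1 hm2).
by move=> k1 k2; apply: nilindex_prod.
Qed.
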